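(* Let $n\ge 0$. For a noncrossing linked partition $\pi$ of $[n+1]$, define a lattice path $\phi(\pi)$ starting at $(0,0)$ with steps $N=(0,1)$, $E=(1,0)$, $D=(1,1)$ as follows. For $i=0,1,\dots,n-1$ in turn (the path being on the vertical line $x=i$): Step 1: if $i+1$ is the minimum of a block $B$ of $\pi$ with $|B|=k$, perform $k-1$ $N$-steps (otherwise perform none); Step 2: perform one $D$-step if $i+2$ is a singly covered minimal element of $\pi$, and one $E$-step otherwise. Then $\phi(\pi)$ is a Schröder path of length $n$, and $\phi$ is a bijection from the set of noncrossing linked partitions of $[n+1]$ to the set of Schröder paths of length $n$.
   Context: Two finite sets of integers $E,F$ are nearly disjoint if for every $i\in E\cap F$ either ($i=\min(E)$, $|E|>1$, $i\ne\min(F)$) or ($i=\min(F)$, $|F|>1$, $i\ne\min(E)$). A linked partition of $[n]$ is a set of nonempty subsets (blocks) of $[n]$ with union $[n]$, any two distinct blocks nearly disjoint; it is noncrossing if there are no two distinct blocks $B,B'$ and $a,c\in B$, $b,d\in B'$ with $a<b<c<d$. In a linked partition each element lies in exactly one or exactly two blocks; it is called singly covered or doubly covered accordingly. An element $i$ is a minimal element of $\pi$ if it is the minimum of some block; it is a singly covered minimal element if in addition it is singly covered. A Schröder path of length $n$ is a lattice path from $(0,0)$ to $(n,n)$ with steps $(1,0)$, $(0,1)$, $(1,1)$ that never goes below the line $y=x$. *)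

(* Defs.v *)
From mathcomp Require Import all_boot.
Set Implicit Arguments. Unset Strict Implicit. Unset Printing Implicit Defensive.

(* Ground set [m] = {1,...,m} is represented by 'I_m, element j+1 <-> ordinal of value j
   (an order-preserving relabelling). *)

Section LinkedPartitions.
Variable m : nat.
Implicit Types (E F B : {set 'I_m}) (P : {set {set 'I_m}}).

Definition is_min (i : 'I_m) E : bool := (i \in E) && [forall j in E, i <= j].

Definition nearly_disjoint E F : Prop :=
  forall i, i \in E -> i \in F ->
    (is_min i E && (1 < #|E|) && ~~ is_min i F) ||
    (is_min i F && (1 < #|F|) && ~~ is_min i E).

Definition linked_partition P : Prop :=
  (forall B, B \in P -> B != set0) /\
  (forall i : 'I_m, exists2 B, B \in P & i \in B) /\
  (forall B B', B \in P -> B' \in P -> B != B' -> nearly_disjoint B B').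

Definition noncrossing P : Prop :=
  ~ exists B B' (a b c d : 'I_m),
      [/\ B \in P, B' \in P, B != B' &
       [/\ a \in B, c \in B, b \in B', d \in B' & [/\ a < b, b < c & c < d]]].

Definition nc_linked_partition P : Prop := linked_partition P /\ noncrossing P.

Definition cover_count P (i : 'I_m) : nat := #|[set B in P | i \in B]|.

Definition singly_covered P i : bool := cover_count P i == 1.

Definition minimal_elt P i : bool := [exists B in P, is_min i B].

Definition singly_covered_minimal P i : bool := minimal_elt P i && singly_covered P i.

Definition block_with_min P (k : nat) : option {set 'I_m} :=
  [pick B in P | [exists i : 'I_m, (val i == k) && is_min i B]].

Definition scm_val P (k : nat) : bool :=
  [exists i : 'I_m, (val i == k) && singly_covered_minimal P i].

End LinkedPartitions.

Inductive step := N | E | D.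

Definition xcoord (p : seq step) : nat := count (fun s => if s is N then false else true) p.
Definition ycoord (p : seq step) : nat := count (fun s => if s is E then false else true) p.

Definition schroder_path (n : nat) (p : seq step) : Prop :=
  [/\ xcoord p = n, ycoord p = n & forall k, xcoord (take k p) <= ycoord (take k p)].

(* The map phi on linked partitions of [n+1] ('I_n.+1).
   For i = 0..n-1: Step 1 uses element i+1 (ordinal value i),
   Step 2 uses element i+2 (ordinal value i+1). *)
Definition phi (n : nat) (P : {set {set 'I_n.+1}}) : seq step :=
  flatten [seq nseq (if block_with_min P i is Some B then #|B| - 1 else 0) N
                 ++ [:: if scm_val P i.+1 then D else E] | i <- iota 0 n].

(* Main.v *)
Require Import Defs.
From mathcomp Require Import all_boot.
From mathcomp Require Import zify.
From Stdlib Require Import FunctionalExtensionality.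
Set Implicit Arguments. Unset Strict Implicit. Unset Printing Implicit Defensive.

Definition isN (s : step) : bool := if s is N then true else false.
Definition isE (s : step) : bool := if s is E then true else false.
Definition isD (s : step) : bool := if s is D then true else false.

Lemma xcoordE q : xcoord q = count isE q + count isD q.
Proof. rewrite /xcoord; elim: q => [|s q IH] //=; rewrite IH; case: s => /=; lia. Qed.
Lemma ycoordE q : ycoord q = count isN q + count isD q.
Proof. rewrite /ycoord; elim: q => [|s q IH] //=; rewrite IH; case: s => /=; lia. Qed.

Definition grp (a : nat -> nat) (x : nat -> step) (s : seq nat) :=
  flatten [seq nseq (a i) N ++ [:: x i] | i <- s].

Lemma grp_cons a x i s : grp a x (i :: s) = nseq (a i) N ++ x i :: grp a x s.
Proof. by rewrite /grp /= -catA. Qed.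
Lemma grp_cat a x s1 s2 : grp a x (s1 ++ s2) = grp a x s1 ++ grp a x s2.
Proof. by rewrite /grp map_cat flatten_cat. Qed.
Lemma grp1 a x i : grp a x [:: i] = nseq (a i) N ++ [:: x i].
Proof. by rewrite grp_cons. Qed.

Lemma eq_grp a a' x x' s : {in s, a =1 a'} -> {in s, x =1 x'} -> grp a x s = grp a' x' s.
Proof.
elim: s => // i s IH ha hx; rewrite !grp_cons ha ?hx ?mem_head // IH // => j hj.
- by apply: ha; rewrite inE hj orbT.
- by apply: hx; rewrite inE hj orbT.
Qed.

Lemma count_grp (P : pred step) a x s : P N = false ->
  count P (grp a x s) = count (fun i => P (x i)) s.
Proof.
move=> hP; elim: s => [|i s IH] //; rewrite grp_cons count_cat count_nseq hP /= IH; lia.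
Qed.

Lemma cN_grp a x s : (forall i, isN (x i) = false) ->
  count isN (grp a x s) = \sum_(i <- s) a i.
Proof.
move=> hx; elim: s => [|i s IH]; first by rewrite big_nil.
rewrite grp_cons count_cat count_nseq /= hx IH big_cons; lia.
Qed.

Lemma sum_iota (f : nat -> nat) m : \sum_(i <- iota 0 m) f i = \sum_(i < m) f i.
Proof. by rewrite -(big_mkord xpredT) /index_iota subn0. Qed.

Lemma sum_eq_ord (y m : nat) : \sum_(i < m) (y == i) = (y < m).
Proof.
elim: m => [|m IH]; first by rewrite big_ord0.
rewrite big_ord_recr /= IH ltnS leq_eqVlt.
by case: (ltngtP y m) => h /=; try lia.
Qed.

Lemma exch (par : nat -> option nat) m s :
  \sum_(i < m) count (fun j => par j == Some (val i)) s =
  count (fun j => if par j is Some y then y < m else false) s.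
Proof.
elim: s => [|j s IH]; first by rewrite big1.
rewrite /= big_split /= IH; congr (_ + _).
case: (par j) => [y|] /=; last by rewrite big1.
exact: sum_eq_ord.
Qed.

Lemma shift_count (f : pred nat) k : count (fun i => f i.+1) (iota 0 k) = count f (iota 1 k).
Proof. by rewrite (iotaDl 1 0) count_map; apply: eq_count => i /=; rewrite add1n. Qed.

Lemma iotaSr m : iota 0 m.+1 = iota 0 m ++ [:: m].
Proof. by rewrite -addn1 iotaD. Qed.

Definition good s q := forall k, count isE (take k q) <= s + count isN (take k q).

Lemma good_cat s a b : good s a -> good (s + count isN a - count isE a) b ->
  count isE a <= s + count isN a -> good s (a ++ b).
Proof.
move=> ha hb hab k; rewrite take_cat; case: ifP => hk; first exact: ha.
rewrite !count_cat; have := hb (k - size a); lia.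
Qed.

Lemma good_grp1 s c X : (isE X -> 0 < s + c) -> good s (nseq c N ++ [:: X]).
Proof.
move=> h k; rewrite take_cat size_nseq; case: ltnP => hk.
  by rewrite take_nseq ?(ltnW hk) // count_nseq /=; lia.
rewrite !count_cat !count_nseq /=.
case: (k - c) => [|k'] /=; first lia.
by case: X h => /= h; try lia; have := h isT; lia.
Qed.

Lemma grp_prefix (a : nat -> nat) (x : nat -> step) len : (forall i, isN (x i) = false) ->
  (forall m, m < len -> count (fun i => isE (x i)) (iota 0 m.+1) <= \sum_(i < m.+1) a i) ->
  forall k, count isE (take k (grp a x (iota 0 len))) <= count isN (take k (grp a x (iota 0 len))).
Proof.
move=> hx hyp.
suff: forall m, m <= len -> good 0 (grp a x (iota 0 m)) /\
   count isE (grp a x (iota 0 m)) <= count isN (grp a x (iota 0 m)).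
  by move=> /(_ len (leqnn _)) [h _] k; exact: h.
elim=> [|m IH] hm.
  by split => // k; rewrite /= take_nil.
have [g1 g2] := IH (ltnW hm).

have hE : count isE (grp a x (iota 0 m)) = count (fun i => isE (x i)) (iota 0 m).
  exact: count_grp.
have hN : count isN (grp a x (iota 0 m)) = \sum_(i < m) a i.
  by rewrite (cN_grp _ _ hx) sum_iota.
move: (hyp m hm); rewrite big_ord_recr iotaSr count_cat /= => h3.
rewrite grp_cat grp1; split; last first.
  rewrite !count_cat !count_nseq /= hx hE hN !mul0n !mul1n /= !addn0. lia.
apply: good_cat => //.
apply: good_grp1 => hE'; move: h3; rewrite hE' hE hN /= addn0; lia.
Qed.

Definition cnt n (par : nat -> option nat) i := count (fun j => par j == Some i) (iota 0 n.+1).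
Definition Xs (par : nat -> option nat) i := if par i.+1 == None then D else E.
Definition path n par := grp (cnt n par) (Xs par) (iota 0 n).
Definition valid n (par : nat -> option nat) := forall j y, par j = Some y -> y < j <= n.
Definition ncp (par : nat -> option nat) :=
  forall j k x y, par j = Some x -> par k = Some y -> x < y -> y < j -> j < k -> False.

Lemma Xs_N par i : isN (Xs par i) = false.
Proof. by rewrite /Xs; case: (_ == _). Qed.
Lemma isE_Xs par i : isE (Xs par i) = (par i.+1 != None).
Proof. by rewrite /Xs; case: (_ == _). Qed.
Lemma isD_Xs par i : isD (Xs par i) = ~~ isE (Xs par i).
Proof. by rewrite /Xs; case: (_ == _). Qed.

Lemma countED par n : count (fun i => isE (Xs par i)) (iota 0 n) +
  count (fun i => isD (Xs par i)) (iota 0 n) = n.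
Proof.
rewrite -{3}(size_iota 0 n) -(count_predC (fun i => isE (Xs par i))).
by congr (_ + _); apply: eq_count => i; rewrite /= isD_Xs.
Qed.

Lemma valid0 n par : valid n par -> par 0 = None.
Proof. by move=> v; case e: (par 0) => [y|] //; have := v _ _ e. Qed.
Lemma validn n par j : valid n par -> n < j -> par j = None.
Proof. move=> v hj; case e: (par j) => [y|] //; have := v _ _ e; lia. Qed.

Lemma sum_cnt n par m : \sum_(i < m) cnt n par i =
  count (fun j => if par j is Some y then y < m else false) (iota 0 n.+1).
Proof. exact: exch. Qed.

Lemma path_schroder n par : valid n par -> schroder_path n (path n par).
Proof.
move=> v; have hx := Xs_N par.
have e0 := valid0 v.
split.
- by rewrite xcoordE /path !count_grp // countED.
- rewrite ycoordE /path cN_grp // count_grp // sum_iota sum_cnt.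
  have -> : count (fun j => if par j is Some y then y < n else false) (iota 0 n.+1) =
            count (fun i => isE (Xs par i)) (iota 0 n).
    rewrite (eq_in_count (a2 := fun j => par j != None)); last first.
      move=> j; rewrite mem_iota => hj; case e: (par j) => [y|] //=.
      by have := v _ _ e; lia.
    rewrite /= e0 /= add0n -shift_count.
    by apply: eq_count => i; rewrite isE_Xs.
  exact: countED.
- move=> k; rewrite xcoordE ycoordE leq_add2r.
  apply: grp_prefix => // m hm.
  rewrite sum_cnt.
  have -> : count (fun i => isE (Xs par i)) (iota 0 m.+1) =
            count (fun j => if par j is Some y then y < m.+1 else false) (iota 1 m.+1).
    rewrite -shift_count; apply: eq_in_count => i; rewrite mem_iota isE_Xs => hi.
    case e: (par i.+1) => [y|] //=; have := v _ _ e; lia.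
  have -> : n.+1 = 1 + (m.+1 + (n - m.+1)) by lia.
  rewrite iotaD count_cat iotaD count_cat add0n; lia.
Qed.

Lemma nseq_cons_inj a a' x x' r r' : isN x = false -> isN x' = false ->
  nseq a N ++ x :: r = nseq a' N ++ x' :: r' -> [/\ a = a', x = x' & r = r'].
Proof.
move=> hx hx'; elim: a a' => [|a IH] [|a'] /=.
- by case=> -> ->.
- by case=> e; rewrite e in hx.
- by case=> e; rewrite -e in hx'.
- by case=> /IH [-> -> ->].
Qed.

Lemma grp_inj a a' x x' s : (forall i, isN (x i) = false) -> (forall i, isN (x' i) = false) ->
  grp a x s = grp a' x' s -> forall i, i \in s -> a i = a' i /\ x i = x' i.
Proof.
move=> hx hx'; elim: s => // j s IH; rewrite !grp_cons => h.
case/nseq_cons_inj: h => // e1 e2 e3 i; rewrite inE => /orP[/eqP -> //|]; exact: IH.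
Qed.

Definition below (par : nat -> option nat) y j := count (fun k => par k == Some y) (iota 0 j).

Lemma cnt_split n par y j : j <= n -> cnt n par y =
  below par y j + (par j == Some y) + count (fun k => par k == Some y) (iota j.+1 (n - j)).
Proof.
move=> hj; rewrite /cnt /below.
have -> : n.+1 = j + (n - j).+1 by lia.
by rewrite iotaD count_cat add0n /= addnA.
Qed.

Lemma open_char n par j x : valid n par -> ncp par -> par j = Some x ->
  below par x j < cnt n par x /\ forall y, x < y -> y < j -> cnt n par y = below par y j.
Proof.
move=> v c e; have hj := v _ _ e.
split.
  rewrite (cnt_split _ _ (_ : j <= n)) ?e ?eqxx /=; lia.
move=> y h1 h2; rewrite (cnt_split _ _ (_ : j <= n)); last lia.
have -> : (par j == Some y) = false by rewrite e; apply/eqP; case; lia.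
rewrite (eq_in_count (a2 := pred0)) ?count_pred0 ?addn0 //.
move=> k; rewrite mem_iota => hk /=; apply/eqP => hk'.
by apply: (c j k x y) => //; lia.
Qed.

Lemma path_inj n par par' : valid n par -> valid n par' -> ncp par -> ncp par' ->
  path n par = path n par' -> forall j, par j = par' j.
Proof.
move=> v v' c c' h.
have H := grp_inj (Xs_N par) (Xs_N par') h.
elim/ltn_ind => j IH.
case: (leqP j n) => hjn; last by rewrite (validn v hjn) (validn v' hjn).
case: j hjn IH => [|i] hjn IH; first by rewrite (valid0 v) (valid0 v').
have [hc hX] := H i (ltac:(rewrite mem_iota; lia)).
have eqc : forall y, y < n -> cnt n par y = cnt n par' y.
  by move=> y hy; have [] := H y (ltac:(rewrite mem_iota; lia)).
have eqb : forall y, below par y i.+1 = below par' y i.+1.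
  move=> y; apply: eq_in_count => k; rewrite mem_iota => hk /=.
  by rewrite IH //; lia.
case e: (par i.+1) => [x|]; case e': (par' i.+1) => [x'|].
- have [o1 f1] := open_char v c e; have [o2 f2] := open_char v' c' e'.
  have hx := v _ _ e; have hx' := v' _ _ e'.
  case: (ltngtP x x') => hlt; last by rewrite hlt.
  + have := f1 x' hlt (ltac:(lia)); move: o2; rewrite -eqc -?eqb; lia.
  + have := f2 x hlt (ltac:(lia)); move: o1; rewrite eqc ?eqb; lia.
- by move: hX; rewrite /Xs e e'.
- by move: hX; rewrite /Xs e e'.
- by [].
Qed.

Lemma nseq_rcons r (s : step) : nseq r s ++ [:: s] = nseq r.+1 s.
Proof. by elim: r => //= r ->. Qed.

Lemma decomp q : exists a x r, (forall i, isN (x i) = false) /\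
  q = grp a x (iota 0 (xcoord q)) ++ nseq r N.
Proof.
elim/last_ind: q => [|q s [a [x [r [hx eq]]]]].
  by exists (fun _ => 0), (fun _ => E), 0.
case: s.
- exists a, x, r.+1; split => //.
  have -> : xcoord (rcons q N) = xcoord q by rewrite /xcoord -cats1 count_cat /=; lia.
  by rewrite {1}eq -cats1 -catA nseq_rcons.
- set m := xcoord q.
  exists (fun i => if i == m then r else a i), (fun i => if i == m then E else x i), 0.
  split; first by move=> i; case: (i == m).
  have -> : xcoord (rcons q E) = m.+1 by rewrite /m /xcoord -cats1 count_cat /=; lia.
  rewrite iotaSr grp_cat grp1 eqxx cats0 -cats1 {1}eq -catA.
  congr (_ ++ _); apply: eq_grp => i; rewrite mem_iota => hi; have -> : (i == m) = false by lia.
  by []. by [].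
- set m := xcoord q.
  exists (fun i => if i == m then r else a i), (fun i => if i == m then D else x i), 0.
  split; first by move=> i; case: (i == m).
  have -> : xcoord (rcons q D) = m.+1 by rewrite /m /xcoord -cats1 count_cat /=; lia.
  rewrite iotaSr grp_cat grp1 eqxx cats0 -cats1 {1}eq -catA.
  congr (_ ++ _); apply: eq_grp => i; rewrite mem_iota => hi; have -> : (i == m) = false by lia.
  by []. by [].
Qed.

Definition opn (a : nat -> nat) (l : seq (option nat)) y := count (fun o => o == Some y) l < a y.
Fixpoint fmax a l y : option nat :=
  match y with 0 => None | y'.+1 => if opn a l y' then Some y' else fmax a l y' end.
Definition nxt n a (x : nat -> step) j l :=
  if (0 < j) && (j <= n) && isE (x j.-1) then fmax a l j else None.
Fixpoint pre n a x j : seq (option nat) :=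
  if j is j'.+1 then rcons (pre n a x j') (nxt n a x j' (pre n a x j')) else [::].
Definition gpar n a x j := nxt n a x j (pre n a x j).

Lemma pre_map n a x j : pre n a x j = map (gpar n a x) (iota 0 j).
Proof. elim: j => // j IH; by rewrite iotaSr map_cat -IH cats1. Qed.

Lemma fmax_some a l j y : fmax a l j = Some y ->
  [/\ y < j, opn a l y & forall z, y < z -> z < j -> ~~ opn a l z].
Proof.
elim: j => //= j IH; case: ifP => ho.
  by case=> <-; split => // z h1 h2; lia.
move/IH => [h1 h2 h3]; split => //; first lia.
move=> z hz1 hz2; case: (ltngtP z j) => hz; first exact: h3; first lia.
by rewrite hz ho.
Qed.

Lemma fmax_none a l j : fmax a l j = None -> forall z, z < j -> ~~ opn a l z.
Proof.
elim: j => //= j IH; case: ifP => ho // /IH h z hz.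
case: (ltngtP z j) => hz'; first exact: h; first lia.
by rewrite hz' ho.
Qed.

Lemma below_pre n a x y j : count (fun o => o == Some y) (pre n a x j) = below (gpar n a x) y j.
Proof. by rewrite pre_map count_map. Qed.

Lemma gpar_some n a x j y : gpar n a x j = Some y ->
  [/\ 0 < j, j <= n, isE (x j.-1), y < j & below (gpar n a x) y j < a y /\
      forall z, y < z -> z < j -> a z <= below (gpar n a x) z j].
Proof.
rewrite /gpar /nxt; case: ifP => // /andP [/andP [h1 h2] h3] /fmax_some [h4 h5 h6].
split => //; split; first by move: h5; rewrite /opn below_pre.
by move=> z hz1 hz2; have := h6 z hz1 hz2; rewrite /opn below_pre -leqNgt.
Qed.

Lemma below_S par y j : below par y j.+1 = below par y j + (par j == Some y).
Proof. by rewrite /below iotaSr count_cat /= addn0. Qed.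

Lemma below_mono par y j k : j <= k -> below par y j <= below par y k.
Proof.
move=> h; rewrite /below -(subnKC h) iotaD count_cat; lia.
Qed.

Lemma gpar_valid n a x : valid n (gpar n a x).
Proof. by move=> j y /gpar_some [*]; apply/andP. Qed.

Lemma gpar_bound n a x y j : below (gpar n a x) y j <= a y.
Proof.
elim: j => [|j IH]; first by rewrite /below.
rewrite below_S; case e: (gpar n a x j) => [z|] /=; last lia.
case: (eqVneq z y) => [<-|hne] /=.
  by have [_ _ _ _ []] := gpar_some e; lia.
have -> : (Some z == Some y) = false by apply/eqP; case; apply/eqP.
rewrite addn0; exact: IH.
Qed.

Lemma gpar_ncp n a x : ncp (gpar n a x).
Proof.
move=> j k x0 y ej ek h1 h2 h3.
have [_ _ _ _ [_ hj]] := gpar_some ej.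
have [_ _ _ _ [hk _]] := gpar_some ek.
have := hj y h1 h2; have := below_mono (gpar n a x) y (ltnW h3); lia.
Qed.

Lemma gpar_true n a x j : 0 < j -> j <= n -> isE (x j.-1) ->
  gpar n a x j = fmax a (pre n a x j) j.
Proof. by move=> h1 h2 h3; rewrite /gpar /nxt h1 h2 h3. Qed.

Lemma gpar_false n a x j : isE (x j.-1) = false -> gpar n a x j = None.
Proof. by move=> h; rewrite /gpar /nxt h andbF. Qed.

Lemma count_inv (par : nat -> option nat) (x : nat -> step) i : par 0 = None ->
  (forall k, 0 < k <= i -> (par k != None) = isE (x k.-1)) ->
  count (fun k => par k != None) (iota 0 i.+1) = count (fun k => isE (x k)) (iota 0 i).
Proof.
move=> h0 h; rewrite /= h0 /= add0n -shift_count.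
apply: eq_in_count => k; rewrite mem_iota => hk /=; apply: h; lia.
Qed.

Lemma gpar_exists n (a : nat -> nat) (x : nat -> step) :
  (forall m, m <= n -> count (fun i => isE (x i)) (iota 0 m) <= \sum_(i < m) a i) ->
  forall j, 0 < j <= n -> (gpar n a x j != None) = isE (x j.-1).
Proof.
move=> hpre; elim/ltn_ind => j IH hj.
case: j IH hj => [|i] IH hj; first lia.
have inv : count (fun k => gpar n a x k != None) (iota 0 i.+1) = count (fun k => isE (x k)) (iota 0 i).
  apply: count_inv; first exact: (valid0 (@gpar_valid n a x)).
  by move=> k hk; apply: IH; lia.
case hE: (isE (x i)) => /=.
  case e: (gpar n a x i.+1) => [y|] //.
  have hin : i < n by lia.
  move: e; rewrite (@gpar_true n a x i.+1) //.
  move/fmax_none => hn.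
  have h1 : \sum_(z < i.+1) a z <= \sum_(z < i.+1) count (fun k => gpar n a x k == Some (val z)) (iota 0 i.+1).
    apply: leq_sum => z _; have := hn z (ltn_ord z); rewrite /opn below_pre -leqNgt; exact.
  have h2 : \sum_(z < i.+1) count (fun k => gpar n a x k == Some (val z)) (iota 0 i.+1) =
    count (fun j => if gpar n a x j is Some y then y < i.+1 else false) (iota 0 i.+1).
    exact: exch.
  have h3 : count (fun j => if gpar n a x j is Some y then y < i.+1 else false) (iota 0 i.+1)
         <= count (fun k => gpar n a x k != None) (iota 0 i.+1).
    by apply: sub_count => k /=; case: (gpar n a x k).
  have h4 := hpre i.+1 hj.
  rewrite iotaSr count_cat /= hE /= in h4.
  have h5 := leq_trans h1 (leq_trans (eq_leq h2) h3). rewrite inv in h5. have := leq_trans h4 h5. rewrite addn0. lia.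
by rewrite gpar_false.
Qed.

Lemma sum_le_eq (f g : nat -> nat) m : (forall i, i < m -> f i <= g i) ->
  \sum_(i < m) g i <= \sum_(i < m) f i -> forall i, i < m -> f i = g i.
Proof.
elim: m => [|m IH] hfg hs i hi; first lia.
move: hs; rewrite !big_ord_recr /= => hs.
have hl : \sum_(i < m) f i <= \sum_(i < m) g i.
  by apply: leq_sum => k _; apply: hfg; have := ltn_ord k; lia.
have hm := hfg m (ltnSn m).
set Sg := \sum_(i < m) g i in hs hl; set Sf := \sum_(i < m) f i in hs hl.
case: (ltngtP i m) => hi'; last by rewrite hi'; lia.
  apply: IH => //; [move=> k hk; apply: hfg; lia | lia].
lia.
Qed.

Lemma path_surj n p : schroder_path n p ->
  exists par, [/\ valid n par, ncp par & path n par = p].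
Proof.
case=> hxp hyp hpref.
have [a [x [r [hx eq]]]] := decomp p; rewrite hxp in eq.
have hpre : forall m, m <= n -> count (fun i => isE (x i)) (iota 0 m) <= \sum_(i < m) a i.
  move=> m hm.
  have hp : p = grp a x (iota 0 m) ++ (grp a x (iota m (n - m)) ++ nseq r N).
    by rewrite eq catA -grp_cat -iotaD subnKC.
  have := hpref (size (grp a x (iota 0 m))).
  rewrite {1 2}hp take_size_cat // xcoordE ycoordE (count_grp _ _ _ (P:=isE)) //.
  by rewrite (cN_grp _ _ hx) sum_iota; lia.
have hxy : count isE p + count isD p = count isN p + count isD p.
  by rewrite -xcoordE -ycoordE hxp hyp.
rewrite eq !count_cat !count_nseq /= !(count_grp _ _ _ (P:=isE)) //
   !(count_grp _ _ _ (P:=isD)) // (cN_grp _ _ hx) sum_iota in hxy.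
have hn := hpre n (leqnn n).
have r0 : r = 0 by lia.
have htot : \sum_(i < n) a i <= count (fun i => isE (x i)) (iota 0 n) by lia.
set gp := gpar n a x.
have ex := gpar_exists hpre.
have hcnt : forall y, y < n -> cnt n gp y = a y.
  apply: sum_le_eq; first by move=> y _; exact: (gpar_bound n a x y n.+1).
  rewrite sum_cnt.
  rewrite (eq_in_count (a2 := fun j => gp j != None)); last first.
    move=> j; rewrite mem_iota => hj; case e: (gp j) => [y|] //=.
    by have := gpar_valid e; lia.
  by rewrite (count_inv (x := x)).

exists gp; split; [exact: (@gpar_valid n a x) | exact: gpar_ncp |].
rewrite eq r0 cats0 /path; apply: eq_grp => i; rewrite mem_iota => hi.
  by apply: hcnt; lia.
have := ex i.+1 (ltac:(lia)); have := hx i; rewrite /Xs /=.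
rewrite /gp; case: (x i) => //= _; case: (gpar n a x i.+1) => //. Show.
Qed.

Lemma card_count m (q : pred nat) : #|[set j : 'I_m | q j]| = count q (iota 0 m).
Proof. rewrite cardsE -sum1_card -(big_mkord q (fun _ => 1)) sum1_count /index_iota subn0 //. Qed.

Lemma is_minP m (i : 'I_m) (B : {set 'I_m}) : reflect (i \in B /\ forall j, j \in B -> i <= j) (is_min i B).
Proof. by apply: (iffP andP) => [[h /forall_inP h']|[h h']]; split => //; apply/forall_inP. Qed.

Lemma is_min_uniq m (B : {set 'I_m}) x y : is_min x B -> is_min y B -> x = y.
Proof.
move=> /is_minP [hx hx'] /is_minP [hy hy']; apply: val_inj; apply/eqP.
by rewrite eqn_leq hx' // hy'.
Qed.

Definition child n (par : nat -> option nat) (x j : 'I_n.+1) : bool := par j == Some (nat_of_ord x).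
Definition Bk n (par : nat -> option nat) (x : 'I_n.+1) : {set 'I_n.+1} := [set j | (j == x) || child par x j].
Definition isM n (par : nat -> option nat) (x : 'I_n.+1) : bool := (par x == None) || [exists j, child par x j].
Definition blocks n (par : nat -> option nat) : {set {set 'I_n.+1}} := (@Bk n par) @: [set x : 'I_n.+1 | isM par x].

Lemma child_lt n par (x j : 'I_n.+1) : valid n par -> child par x j -> x < j.
Proof. by move=> v /eqP e; have := v _ _ e; lia. Qed.

Lemma Bk_min n par (x : 'I_n.+1) : valid n par -> is_min x (Bk par x).
Proof.
move=> v; apply/is_minP; split; first by rewrite inE eqxx.
move=> j; rewrite inE => /orP [/eqP -> //|/(child_lt v)]; lia.
Qed.

Lemma Bk_inj n par (x y : 'I_n.+1) : valid n par -> Bk par x = Bk par y -> x = y.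
Proof. by move=> v e; apply: (@is_min_uniq _ (Bk par x)); [exact: Bk_min | rewrite e; exact: Bk_min]. Qed.

Lemma blocksP n par B : reflect (exists2 x, isM par x & B = Bk par x) (B \in blocks n par).
Proof.
apply: (iffP imsetP) => [[x hx ->]|[x hx ->]]; exists x => //; first by move: hx; rewrite inE.
by rewrite inE.
Qed.

Lemma isM_child n par (x j : 'I_n.+1) : child par x j -> isM par x.
Proof. by move=> h; apply/orP; right; apply/existsP; exists j. Qed.

Lemma blocks_linked n par : valid n par -> linked_partition (blocks n par).
Proof.
move=> v; split; [|split].
- move=> B /blocksP [x _ ->]; apply/set0Pn; exists x; by rewrite inE eqxx.
- move=> i; case e: (par i) => [y|].
    have hy : y < n.+1 by have := v _ _ e; lia.
    exists (Bk par (Ordinal hy)).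
      apply/blocksP; exists (Ordinal hy) => //.
      by apply: (@isM_child _ _ _ i); rewrite /child e.
    by rewrite inE /child e eqxx orbT.
  exists (Bk par i); last by rewrite inE eqxx.
  by apply/blocksP; exists i => //; rewrite /isM e.
- move=> B B' /blocksP [x hx ->] /blocksP [y hy ->] hne i.
  have hxy : x != y by apply: contraNneq hne => ->.
  have key : forall x y : 'I_n.+1, isM par x -> child par y x ->
     [&& is_min x (Bk par x), 1 < #|Bk par x| & ~~ is_min x (Bk par y)].
    move=> x0 y0 hx0 hc; rewrite Bk_min //=; apply/andP; split.
      move: hx0; rewrite /isM (eqP hc) /= => /existsP [j hj].
      apply/card_gt1P; exists x0, j; rewrite !inE eqxx hj orbT; split => //.
      by have := child_lt v hj; apply: contraTneq => ->; lia.
    apply/negP => /is_minP [_ h]; have := h y0; rewrite inE eqxx => /(_ isT).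
    have := child_lt v hc; lia.
  rewrite !inE => /orP [/eqP ei | ci] /orP [/eqP ei' | ci'].
  + by move: hxy; rewrite -ei -ei' eqxx.
  + by rewrite ei in ci' *; rewrite -andbA key.
  + by rewrite ei' in ci *; rewrite orbC -andbA key.
  + move: ci ci'; rewrite /child => /eqP -> /eqP [] /val_inj e.
    by move: hxy; rewrite e eqxx.
Qed.

Lemma blocks_nc n par : valid n par -> ncp par -> noncrossing (blocks n par).
Proof.
move=> v c [B [B' [a [b [cc [d [hB hB' hne [ha hc hb hd [h1 h2 h3]]]]]]]]].
case/blocksP: hB => x _ eB; case/blocksP: hB' => y _ eB'; subst B B'.
have hxy : x != y by apply: contraNneq hne => ->.
have mx := Bk_min x v; have my := Bk_min y v.
have hxa : x <= a by case/is_minP: mx => _ /(_ a ha).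
have hyb : y <= b by case/is_minP: my => _ /(_ b hb).
have pc : par cc = Some (nat_of_ord x).
  move: hc; rewrite inE => /orP [/eqP e|/eqP //]; subst cc; lia.
have pd : par d = Some (nat_of_ord y).
  move: hd; rewrite inE => /orP [/eqP e|/eqP //]; subst d; lia.
case: (ltngtP x y) => hlt.
- by apply: (c cc d x y) => //; lia.
- have pb : par b = Some (nat_of_ord y).
    move: hb; rewrite inE => /orP [/eqP e|/eqP //]; subst b; lia.
  by apply: (c b cc y x) => //; lia.
- by move: hxy; rewrite (val_inj hlt) eqxx.
Qed.

Lemma scm_blocks n par (jo : 'I_n.+1) : valid n par ->
  singly_covered_minimal (blocks n par) jo = (par jo == None).
Proof.
move=> v; rewrite /singly_covered_minimal /minimal_elt /singly_covered /cover_count.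
case e: (par jo) => [y|] /=.
- apply/negbTE/negP => /andP [/existsP [B /andP [hB hmin]] hc].
  case/blocksP: hB => x hx eB; subst B.
  have ex : jo = x by apply: (is_min_uniq hmin); exact: Bk_min.
  subst x.
  have hy : y < n.+1 by have := v _ _ e; lia.
  set yo := Ordinal hy.
  have cy : child par yo jo by rewrite /child e.
  have hne : Bk par jo != Bk par yo.
    apply/negP => /eqP /(Bk_inj v) ej; have := child_lt v cy; rewrite -ej; lia.
  have : #|[set Bk par jo; Bk par yo]| <= #|[set B in blocks n par | jo \in B]|.
    apply: subset_leq_card; apply/subsetP => B; rewrite !inE => /orP [/eqP ->|/eqP ->].
      by rewrite inE eqxx andbT; apply/blocksP; exists jo.
    rewrite inE cy orbT andbT; apply/blocksP; exists yo => //; exact: isM_child cy.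
  by rewrite cards2 hne (eqP hc).
- apply/andP; split.
    apply/existsP; exists (Bk par jo); rewrite Bk_min // andbT.
    by apply/blocksP; exists jo => //; rewrite /isM e.
  have -> : [set B in blocks n par | jo \in B] = [set Bk par jo].
    apply/setP => B; rewrite !inE; apply/andP/eqP => [[/blocksP [x _ ->]]|->].
      by rewrite inE /child e orbF => /eqP ->.
    split; last by rewrite inE eqxx.
    by apply/blocksP; exists jo => //; rewrite /isM e.
  by rewrite cards1.
Qed.

Lemma blocks_phi n par : valid n par -> phi (blocks n par) = path n par.
Proof.
move=> v; rewrite /phi /path /grp; congr flatten; apply/eq_in_map => i.
rewrite mem_iota => hi; congr (nseq _ N ++ [:: _]).
- rewrite /block_with_min; case: pickP => [B /andP [hB /existsP [io /andP [/eqP hio hmin]]] | hnone].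
    case/blocksP: hB => x hx eB; subst B.
    have ex : io = x by apply: (is_min_uniq hmin); exact: Bk_min.
    subst io i.
    have -> : Bk par x = x |: [set j | child par x j].
      by apply/setP => j; rewrite !inE.
    rewrite cardsU1 inE.
    have -> : child par x x = false by apply/negP => /(child_lt v); lia.
    by rewrite /= add1n subSS subn0; exact: (card_count n.+1 (fun k => par k == Some (nat_of_ord x))).
  rewrite /cnt; apply/esym/eqP; rewrite -leqn0 leqNgt -has_count; apply/hasP => [[j hj /eqP e]].
  have hin : i < n.+1 by lia.
  have hj' : j < n.+1 by move: hj; rewrite mem_iota; lia.
  have cj : child par (Ordinal hin) (Ordinal hj') by rewrite /child /= e.
  have := hnone (Bk par (Ordinal hin)).
  have -> : Bk par (Ordinal hin) \in blocks n par.
    by apply/blocksP; exists (Ordinal hin) => //; exact: isM_child cj.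
  suff -> : [exists i0, (\val i0 == i) && is_min i0 (Bk par (Ordinal hin))] by [].
  by apply/existsP; exists (Ordinal hin); rewrite eqxx Bk_min.
- rewrite /scm_val.
  have hi1 : i.+1 < n.+1 by lia.
  have -> : [exists io : 'I_n.+1, (val io == i.+1) && singly_covered_minimal (blocks n par) io]
          = (par i.+1 == None).
    apply/existsP/idP => [[io /andP [/eqP <-]]|h].
      by rewrite scm_blocks.
    by exists (Ordinal hi1); rewrite /= eqxx scm_blocks.
  by rewrite /Xs.
Qed.

Definition nm n (P : {set {set 'I_n.+1}}) (j x : 'I_n.+1) : bool :=
  [exists B in P, [&& j \in B, is_min x B & x != j]].
Definition parP n (P : {set {set 'I_n.+1}}) (j : nat) : option nat :=
  if j < n.+1 then omap (@nat_of_ord n.+1) [pick x | nm P (inord j) x] else None.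

Lemma exists_min m (B : {set 'I_m}) : B != set0 -> exists x, is_min x B.
Proof.
case/set0Pn => i0 hi0; exists [arg min_(i < i0 | i \in B) (nat_of_ord i)].
case: arg_minnP => // x hx hmin; apply/is_minP; split => // j hj; exact: hmin.
Qed.

Lemma nm_lt n P (j x : 'I_n.+1) : nm P j x -> x < j.
Proof.
case/existsP => B /andP [_ /and3P [hj /is_minP [_ h] hne]].
have := h j hj; rewrite leq_eqVlt => /orP [/eqP e|//].
by move: hne; rewrite (val_inj e) eqxx.
Qed.


Lemma min_block_uniq n (P : {set {set 'I_n.+1}}) B B' x : linked_partition P ->
  B \in P -> B' \in P -> is_min x B -> is_min x B' -> B = B'.
Proof.
move=> [_ [_ nd]] hB hB' hm hm'; apply/eqP/negPn/negP => hne.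
have := nd B B' hB hB' hne x (proj1 (elimT (is_minP _ _) hm)) (proj1 (elimT (is_minP _ _) hm')).
by rewrite hm hm' /= !andbF.
Qed.

Lemma nm_uniq n (P : {set {set 'I_n.+1}}) j x x' : linked_partition P ->
  nm P j x -> nm P j x' -> x = x'.
Proof.
move=> lp /existsP [B /andP [hB /and3P [hj hm hne]]] /existsP [B' /andP [hB' /and3P [hj' hm' hne']]].
case: (eqVneq B B') => [e|hBB]; first by subst B'; exact: is_min_uniq hm hm'.
have := lp.2.2 B B' hB hB' hBB j hj hj'.
case/orP => /andP [/andP [h1 _] _].
  by move: hne; rewrite (is_min_uniq hm h1) eqxx.
by move: hne'; rewrite (is_min_uniq hm' h1) eqxx.
Qed.

Lemma parP_ord n P (jo : 'I_n.+1) : parP P jo = omap (@nat_of_ord n.+1) [pick x | nm P jo x].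
Proof. by rewrite /parP ltn_ord inord_val. Qed.

Lemma childP n (P : {set {set 'I_n.+1}}) x jo : linked_partition P ->
  child (parP P) x jo = nm P jo x.
Proof.
move=> lp; rewrite /child parP_ord; case: pickP => [x' hx'|hn] /=.
  apply/idP/idP => [/eqP [] /val_inj <- //|h].
  by rewrite (nm_uniq lp hx' h).
by rewrite hn.
Qed.

Lemma parP_someE n (P : {set {set 'I_n.+1}}) j y : parP P j = Some y ->
  exists jo xo : 'I_n.+1, [/\ nat_of_ord jo = j, nat_of_ord xo = y & nm P jo xo].
Proof.
rewrite /parP; case: ifP => hj //; case: pickP => // x hx [<-].
by exists (inord j), x; rewrite inordK.
Qed.

Lemma parP_valid n (P : {set {set 'I_n.+1}}) : valid n (parP P).
Proof.
move=> j y /parP_someE [jo [xo [<- <- h]]]; have := nm_lt h; have := ltn_ord jo; lia.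
Qed.

Lemma P_block_eq n (P : {set {set 'I_n.+1}}) B x : linked_partition P ->
  B \in P -> is_min x B -> B = Bk (parP P) x.
Proof.
move=> lp hB hm; apply/setP => j; rewrite inE childP //; apply/idP/idP => [hj|].
  case: (eqVneq j x) => [->|hne] /=; first by [].
  by apply/existsP; exists B; rewrite hB hj hm eq_sym hne.
case/orP => [/eqP ->|/existsP [B' /andP [hB' /and3P [hj hm' _]]]].
  by case/is_minP: hm.
by rewrite (min_block_uniq lp hB hB' hm hm').
Qed.

Lemma P_blocks n (P : {set {set 'I_n.+1}}) : linked_partition P -> P = blocks n (parP P).
Proof.
move=> lp; apply/setP => B; apply/idP/blocksP => [hB|[x hx ->]].
  have [x hx] := exists_min (lp.1 B hB).
  exists x; last exact: P_block_eq.
  rewrite /isM; case e: (parP P x) => [y|] //=.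
  move: e; rewrite parP_ord; case: pickP => //= yo hyo _.
  case/existsP: (hyo) => B'' /andP [hB'' /and3P [hxB'' hm'' hne]].
  have hBB : B != B''.
    by apply/negP => /eqP e; subst B''; move: hne; rewrite (is_min_uniq hm'' hx) eqxx.
  have hxB : x \in B by case/is_minP: hx.
  case/orP: (lp.2.2 B B'' hB hB'' hBB x hxB hxB'') => /andP [/andP [h1 h2] h3].
    case/card_gt1P: h2 => j1 [j2 [hj1 hj2 hj12]].
    have [j [hj hjx]] : exists j, j \in B /\ j != x.
      case: (eqVneq j1 x) => [e|]; last by exists j1.
      by exists j2; split => //; rewrite -e eq_sym.
    apply/existsP; exists j; rewrite childP //.
    by apply/existsP; exists B; rewrite hB hj hx eq_sym hjx.
  by move: hne; rewrite (is_min_uniq hm'' h1) eqxx.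
move: hx; rewrite /isM => /orP [/eqP hN|/existsP [j]].
  have [C hC hxC] := lp.2.1 x.
  have [m hm] := exists_min (lp.1 C hC).
  case: (eqVneq m x) => [e|hne].
    by subst m; rewrite -(P_block_eq lp hC hm).
  have : child (parP P) m x.
    by rewrite childP //; apply/existsP; exists C; rewrite hC hxC hm hne.
  by rewrite /child hN.
rewrite childP // => /existsP [C /andP [hC /and3P [_ hm _]]].
by rewrite -(P_block_eq lp hC hm).
Qed.

Lemma P_ncp n (P : {set {set 'I_n.+1}}) : linked_partition P -> noncrossing P -> ncp (parP P).
Proof.
move=> lp nc j k x y ej ek h1 h2 h3.
case/parP_someE: ej => jo [xo [ej ex /existsP [B /andP [hB /and3P [hjB hmB _]]]]].
case/parP_someE: ek => ko [yo [ek ey /existsP [B' /andP [hB' /and3P [hkB' hmB' _]]]]].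
apply: nc; exists B, B', xo, yo, jo, ko; split => //.
  apply/negP => /eqP e; subst B'; have := is_min_uniq hmB hmB'.
  by move=> e; move: h1; rewrite -ex -ey e ltnn.
split => //; [by case/is_minP: hmB | by case/is_minP: hmB' | split; lia].
Qed.
Unset Implicit Arguments.

Theorem theorem2p4 (n : nat) :
  (forall P : {set {set 'I_n.+1}}, nc_linked_partition P -> schroder_path n (phi P)) /\
  (forall P Q : {set {set 'I_n.+1}}, nc_linked_partition P -> nc_linked_partition Q ->
      phi P = phi Q -> P = Q) /\
  (forall p : seq step, schroder_path n p ->
      exists P : {set {set 'I_n.+1}}, nc_linked_partition P /\ phi P = p).
Proof.
split; [|split].
- move=> P [lp nc]; rewrite (P_blocks lp) blocks_phi; last exact: parP_valid.
  apply: path_schroder; exact: parP_valid.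
- move=> P Q [lpP ncP] [lpQ ncQ] h.
  have eP := P_blocks lpP; have eQ := P_blocks lpQ.
  have vP := @parP_valid n P; have vQ := @parP_valid n Q.
  rewrite eP eQ (blocks_phi vP) (blocks_phi vQ) in h.
  have e := path_inj (@parP_valid n P) (@parP_valid n Q) (P_ncp lpP ncP) (P_ncp lpQ ncQ) h.
  have ef : parP P = parP Q by apply: functional_extensionality.
  by rewrite eP eQ ef.
- move=> p hp; have [par [v c e]] := path_surj hp.
  exists (blocks n par); split; last by rewrite blocks_phi.
  split; [exact: blocks_linked | exact: blocks_nc].
Qed.
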